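(* Fix $q\in(2,4]$ and $\vartheta>0$. Any arclength parametrized (hence length one) injective regular closed curve $\Gamma\in W^{2,2}(\mathbb{R}/\mathbb{Z},\mathbb{R}^3)$ which is a critical point of $S_\vartheta$ satisfies $$DE_\vartheta(\Gamma)+\lambda\,D\mathscr{L}(\Gamma)=0$$ with Lagrange multiplier $\lambda:=E_\vartheta(\Gamma)$. Moreover, any arclength parametrized curve $\Gamma$ which is critical for the problem of minimizing $E_\vartheta$ on $\mathscr{C}(\mathcal{K})$ (for a knot class $\mathcal{K}$) satisfies the same equation with the same $\lambda=E_\vartheta(\Gamma)$.
   Context: $\mathscr{L}$ is length; $E(\gamma)=\int_\gamma\kappa^2ds$; $\mathrm{TP}_q(\gamma)=\iint_{(\mathbb{R}/\mathbb{Z})^2} r_{tp}(\gamma(s),\gamma(t))^{-q}|\gamma'(s)||\gamma'(t)|\,ds\,dt$ with $r_{tp}(\gamma(s),\gamma(t))$ the radius of the circle through $\gamma(s),\gamma(t)$ tangent to $\gamma$ at $\gamma(s)$; $E_\vartheta=E+\vartheta\mathrm{TP}_q^{1/(q-2)}$, $S_\vartheta=\mathscr{L}\cdot E_\vartheta$; these are continuously differentiable on the open subset of $W^{2,2}(\mathbb{R}/\mathbb{Z},\mathbb{R}^3)$ of injective regular closed curves, with Fréchet derivatives $D$ acting on $h\in W^{2,2}(\mathbb{R}/\mathbb{Z},\mathbb{R}^3)$. $\mathscr{C}(\mathcal{K})=\{\gamma\in W^{2,2}(\mathbb{R}/\mathbb{Z},\mathbb{R}^3):\mathscr{L}(\gamma)=1,|\gamma'|>0,\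 \gamma\text{ embedded of knot type }\mathcal{K}\}$; critical for the constrained problem means $DE_\vartheta(\Gamma)+\mu D\mathscr{L}(\Gamma)=0$ for some $\mu\in\mathbb{R}$. *)

(* Defs.v *)
From HB Require Import structures.
From mathcomp Require Import all_boot all_order all_algebra.
From mathcomp Require Import all_classical all_reals all_analysis.
Set Implicit Arguments. Unset Strict Implicit. Unset Printing Implicit Defensive.
Import Order.TTheory GRing.Theory Num.Theory.
Import numFieldNormedType.Exports.
Local Open Scope classical_set_scope.
Local Open Scope ring_scope.

Section Defs.
Variable R : realType.

Definition vec := 'rV[R]_3.
Definition dot (u v : vec) : R := \sum_(i < 3) u ord0 i * v ord0 i.
Definition enorm (u : vec) : R := Num.sqrt (dot u u).

(* curves are 1-periodic maps R -> R^3 (i.e. maps R/Z -> R^3) *)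
Definition curve := R -> vec.
Definition periodic1 {T} (g : R -> T) := forall x, g (x + 1) = g x.

Definition d1 (g : curve) : curve := derive1 g.
Definition d2 (g : curve) : curve := derive1 (d1 g).

Local Notation mu := (@lebesgue_measure R).

(* W^{2,2}(R/Z,R) for a scalar 1-periodic function: C^1 with absolutely
   continuous derivative whose a.e. derivative is in L^2(0,1). *)
Definition W22_scalar (c : R -> R) :=
  periodic1 c /\
  exists c1 c2 : R -> R,
    periodic1 c1 /\
    mu.-integrable `[0%R, 1%R] (EFin \o c2) /\
    (\int[mu]_(x in `[0%R, 1%R]) ((c2 x) ^+ 2)%:E < +oo)%E /\
    (forall x, 0 <= x <= 1 -> c1 x = c1 0 + Rintegral mu `[0%R, x] c2) /\
    (forall x, 0 <= x <= 1 -> c x = c 0 + Rintegral mu `[0%R, x] c1).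

Definition W22 (g : curve) := forall i : 'I_3, W22_scalar (fun x => g x ord0 i).

Definition W22norm (h : curve) : R :=
  Num.sqrt (fine (\int[mu]_(x in `[0%R, 1%R])
    ((enorm (h x)) ^+ 2 + (enorm (d1 h x)) ^+ 2 + (enorm (d2 h x)) ^+ 2)%:E)).

Definition is_frechet (F : curve -> R) (G : curve) (dF : curve -> R) :=
  (forall h1 h2, W22 h1 -> W22 h2 -> dF (fun x => h1 x + h2 x) = dF h1 + dF h2) /\
  (forall (a : R) h, W22 h -> dF (fun x => a *: h x) = a * dF h) /\
  (exists C : R, forall h, W22 h -> `|dF h| <= C * W22norm h) /\
  (forall eps : R, 0 < eps -> exists delta : R, 0 < delta /\
     forall h, W22 h -> W22norm h < delta ->
       `|F (fun x => G x + h x) - F G - dF h| <= eps * W22norm h).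

Definition Len (g : curve) : R :=
  fine (\int[mu]_(x in `[0%R, 1%R]) (enorm (d1 g x))%:E).

(* kappa^2 |g'| : |g' x g''|^2 / |g'|^6 * |g'| *)
Definition kappa2_ds (g : curve) (x : R) : R :=
  ((enorm (d1 g x)) ^+ 2 * (enorm (d2 g x)) ^+ 2 - (dot (d1 g x) (d2 g x)) ^+ 2)
  / (enorm (d1 g x)) ^+ 5.

Definition Bend (g : curve) : R :=
  fine (\int[mu]_(x in `[0%R, 1%R]) (kappa2_ds g x)%:E).

(* 1 / r_tp(g s, g t): r_tp is the radius of the circle through g s, g t
   tangent to g at g s; r_tp = |d|^2 / (2 |d - (d.tau) tau|), d = g t - g s *)
Definition inv_rtp (g : curve) (s t : R) : R :=
  let d := g t - g s in
  let tau := (enorm (d1 g s))^-1 *: d1 g s in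
  let perp := d - dot d tau *: tau in
  if d == 0 then 0 else 2 * enorm perp / (enorm d) ^+ 2.

Definition TP (q : R) (g : curve) : R :=
  fine (\int[mu]_(s in `[0%R, 1%R]) \int[mu]_(t in `[0%R, 1%R])
          ((inv_rtp g s t) `^ q * enorm (d1 g s) * enorm (d1 g t))%:E).

Definition Etheta (th q : R) (g : curve) : R :=
  Bend g + th * (TP q g) `^ (1 / (q - 2)).

Definition Stheta (th q : R) (g : curve) : R := Len g * Etheta th q g.

Definition closed_injective (g : curve) :=
  periodic1 g /\ forall s t, 0 <= s < 1 -> 0 <= t < 1 -> g s = g t -> s = t.
Definition arclength (g : curve) := forall x, enorm (d1 g x) = 1.

(* knot type: g1 has the knot type of g0 if it is obtained from g0 by an
   ambient isotopy, up to orientation-preserving reparametrization *)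
Definition ambient_isotopic (g0 g1 : curve) :=
  exists (H Hinv : R -> vec -> vec) (phi : R -> R),
    continuous (fun p : R * vec => H p.1 p.2) /\
    continuous (fun p : R * vec => Hinv p.1 p.2) /\
    (forall t y, H t (Hinv t y) = y /\ Hinv t (H t y) = y) /\
    (forall y, H 0 y = y) /\
    continuous phi /\ (forall x y, x < y -> phi x < phi y) /\
    (forall x, phi (x + 1) = phi x + 1) /\
    (forall x, H 1 (g0 x) = g1 (phi x)).

(* C(K) for the knot class K represented by the embedded curve K0 *)
Definition in_knot_class (K0 g : curve) :=
  W22 g /\ Len g = 1 /\ (forall x, d1 g x != 0) /\ closed_injective g /\
  ambient_isotopic K0 g.

End Defs.

(* Main.v *)
Require Import Defs.
From HB Require Import structures.
From mathcomp Require Import all_boot all_order all_algebra.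
From mathcomp Require Import all_classical all_reals all_analysis.
From mathcomp Require Import ring lra.
Import Order.TTheory GRing.Theory Num.Theory.
Import numFieldNormedType.Exports.
Local Open Scope classical_set_scope.
Local Open Scope ring_scope.

Section IntScale.
Context d (T : measurableType d) (R : realType).
Variable mu : {measure set T -> \bar R}.
Import HBNNSimple.

Definition nnint (f : T -> \bar R) := ereal_sup
  [set sintegral mu h | h in [set h : {nnsfun T >-> R} | forall x, ((h x)%:E <= f x)%E]].

Lemma integral_nnint D f : (\int[mu]_(x in D) f x = nnint (f \_ D)^\+ - nnint (f \_ D)^\-)%E.
Proof. reflexivity. Qed.

Lemma nnint_scale (k : R) (f : T -> \bar R) : 0 < k -> (forall x, 0 <= f x)%E ->
  nnint (fun x => k%:E * f x)%E = (k%:E * nnint f)%E.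
Proof.
move=> k0 f0; rewrite /nnint -ereal_supZl; last exact: ltW.
  congr ereal_sup; apply/seteqP; split => y /=.
  - case=> h /= hle <-.
    have ki0 : 0 <= k^-1 by rewrite invr_ge0 ltW.
    exists (sintegral mu (scale_nnsfun h ki0)).
      exists (scale_nnsfun h ki0) => //= x.
      rewrite EFinM -(@lee_pmul2l _ k%:E) ?lte_fin // muleA -EFinM mulfV ?gt_eqF // mul1r.
      exact: hle.
    rewrite -sintegralrM; congr sintegral; apply/funext => x /=.
    by rewrite mulrA mulfV ?gt_eqF // mul1r.
  - case=> z [h /= hle <-] <-.
    exists (scale_nnsfun h (ltW k0)).
      move=> x /=; rewrite EFinM lee_pmul2l ?lte_fin //; exact: hle.
    by rewrite -sintegralrM.
apply/set0P; exists (sintegral mu (@nnsfun0 _ T R)); exists nnsfun0 => //= x.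
Qed.

Lemma integralZ_pos (k : R) D (f : T -> \bar R) : 0 < k ->
  (\int[mu]_(x in D) (k%:E * f x) = k%:E * \int[mu]_(x in D) f x)%E.
Proof.
move=> k0; rewrite !integral_nnint erestrict_scale ge0_funeposM ?ge0_funenegM ?ltW //.
rewrite !nnint_scale // ; try by move=> x; rewrite ?funepos_ge0 ?funeneg_ge0.
have a0 : (0 <= nnint (f \_ D)^\+)%E.
  apply: ereal_sup_ubound; exists nnsfun0 => //=; [move=> x; exact: funepos_ge0| exact: sintegral0].
have b0 : (0 <= nnint (f \_ D)^\-)%E.
  apply: ereal_sup_ubound; exists nnsfun0 => //=; [move=> x; exact: funeneg_ge0| exact: sintegral0].
have key : forall a b : \bar R, (0 <= a)%E -> (0 <= b)%E ->
    (k%:E * (a - b) = k%:E * a - k%:E * b)%E.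
  have hy : (k%:E * +oo = +oo)%E by rewrite mulr_infty gtr0_sg // mul1e.
  have hny : (k%:E * -oo = -oo)%E by rewrite mulr_infty gtr0_sg // mul1e.
  have on : (- +oo = -oo :> \bar R)%E by [].
  move=> [a| |] [b| |] // _ _.
  - by rewrite -EFinB -!EFinM -EFinB mulrBr.
  - by rewrite on addeNy hny hy -EFinM addeNy.
  - by rewrite hy -EFinN addye // -EFinM -EFinN addye.
  - by rewrite hy on addeNy hny.
by rewrite key.
Qed.

End IntScale.

Section Helpers.
Variable R : realType.
Local Notation mu := (@lebesgue_measure R).

Lemma derive1Z (c : R) (f : R -> 'rV[R]_3) x : c != 0 ->
  derive1 (fun y => c *: f y) x = c *: derive1 f x.
Proof.
move=> c0; rewrite /derive1.
set F := (fun h : R => h^-1 *: (f (h + x) - f x)).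
have -> : (fun h : R => h^-1 *: (c *: f (h + x) - c *: f x)) = (fun h => c *: F h).
  by apply/funext => h; rewrite /F -scalerBr !scalerA mulrC.
have [cv|ncv] := pselect (cvg (F @ 0^')).
  by rewrite limZr.
have ncv' : ~ cvg ((fun h => c *: F h) @ 0^').
  move=> cv; apply: ncv.
  have : cvg ((fun h => c^-1 *: (c *: F h)) @ 0^') by apply: is_cvgZr.
  by under eq_fun do rewrite scalerA mulVf // scale1r.
rewrite /lim /lim_in !xgetPN; first by cbn; apply/rowP => i; rewrite !mxE mulr0.
  by move=> l hl; apply: ncv; apply/cvg_ex; exists l.
by move=> l hl; apply: ncv'; apply/cvg_ex; exists l.
Qed.

Lemma d1_scale (c : R) (g : curve R) : c != 0 ->
  d1 (fun x => c *: g x) = (fun x => c *: d1 g x).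
Proof. by move=> c0; apply/funext => x; rewrite /d1 derive1Z. Qed.

Lemma d2_scale (c : R) (g : curve R) : c != 0 ->
  d2 (fun x => c *: g x) = (fun x => c *: d2 g x).
Proof. by move=> c0; rewrite /d2 d1_scale //; exact: d1_scale. Qed.

Lemma dotZl (c : R) (u v : vec R) : dot (c *: u) v = c * dot u v.
Proof.
rewrite /dot mulr_sumr; apply: eq_bigr => i _; by rewrite mxE mulrA.
Qed.

Lemma dotZr (c : R) (u v : vec R) : dot u (c *: v) = c * dot u v.
Proof.
rewrite /dot mulr_sumr; apply: eq_bigr => i _; rewrite mxE; ring.
Qed.

Lemma dot_ge0 (u : vec R) : 0 <= dot u u.
Proof. by rewrite /dot; apply: sumr_ge0 => i _; exact: mulr_ge0_le0 || rewrite -expr2 sqr_ge0. Qed.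

Lemma enorm_ge0 (u : vec R) : 0 <= enorm u.
Proof. exact: sqrtr_ge0. Qed.

Lemma enormZ (c : R) (u : vec R) : 0 <= c -> enorm (c *: u) = c * enorm u.
Proof.
move=> c0; rewrite /enorm dotZl dotZr mulrA -expr2 sqrtrM ?sqr_ge0 //.
by rewrite sqrtr_sqr ger0_norm.
Qed.

Lemma fineZ_pos (k : R) (x : \bar R) : 0 < k -> fine (k%:E * x)%E = k * fine x.
Proof.
move=> k0; case: x => [x| |] //=.
- by rewrite mulr_infty gtr0_sg // mul1e /= mulr0.
- by rewrite mulr_infty gtr0_sg // mul1e /= mulr0.
Qed.

Lemma fint_scale (k : R) D (f : R -> R) : 0 < k ->
  fine (\int[mu]_(x in D) ((k * f x)%:E)) = k * fine (\int[mu]_(x in D) ((f x)%:E)).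
Proof.
move=> k0.
have -> : (fun x => ((k * f x)%:E)) = (fun x => (k%:E * (f x)%:E)%E).
  by apply/funext => x; rewrite EFinM.
by rewrite integralZ_pos // fineZ_pos.
Qed.

Lemma RintZ (k : R) D (f : R -> R) : 0 < k ->
  Rintegral mu D (fun x => k * f x) = k * Rintegral mu D f.
Proof. exact: fint_scale. Qed.

Lemma W22_scalar_scale (c : R) (g : R -> R) : 0 < c ->
  W22_scalar g -> W22_scalar (fun x => c * g x).
Proof.
move=> c0 [pg [c1 [c2 [p1 [int2 [fin2 [e1 e2]]]]]]].
split; first by move=> x; rewrite /= pg.
exists (fun x => c * c1 x), (fun x => c * c2 x).
split; first by move=> x; rewrite /= p1.
split.
  have -> : (EFin \o (fun x => c * c2 x)) = (fun x => (c%:E * (EFin \o c2) x)%E).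
    by apply/funext => x; rewrite /= EFinM.
  by apply: integrableZl => //.
split.
  have -> : (fun x => ((c * c2 x) ^+ 2)%:E) = (fun x => ((c ^+ 2)%:E * ((c2 x) ^+ 2)%:E)%E).
    by apply/funext => x; rewrite -EFinM exprMn.
  rewrite integralZ_pos ?exprn_gt0 //.
  apply: lte_mul_pinfty => //; by rewrite lee_fin sqr_ge0.
split.
  by move=> x hx; rewrite e1 // RintZ // mulrDr.
by move=> x hx; rewrite e2 // RintZ // mulrDr.
Qed.

Lemma W22_scale (c : R) (h : curve R) : 0 < c -> W22 h -> W22 (fun x => c *: h x).
Proof.
move=> c0 hW i.
have -> : (fun x => (c *: h x) ord0 i) = (fun x => c * h x ord0 i).
  by apply/funext => x; rewrite mxE.
exact: W22_scalar_scale.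
Qed.

Lemma W22norm_ge0 (h : curve R) : 0 <= W22norm h.
Proof. exact: sqrtr_ge0. Qed.

Lemma W22norm_scale (c : R) (h : curve R) : 0 < c ->
  W22norm (fun x => c *: h x) = c * W22norm h.
Proof.
move=> c0; rewrite /W22norm d2_scale ?gt_eqF // d1_scale ?gt_eqF //.
have -> : (fun x => ((enorm (c *: h x)) ^+ 2 + (enorm (c *: d1 h x)) ^+ 2
    + (enorm (c *: d2 h x)) ^+ 2)%:E) = (fun x => ((c ^+ 2) *
    ((enorm (h x)) ^+ 2 + (enorm (d1 h x)) ^+ 2 + (enorm (d2 h x)) ^+ 2))%:E).
  apply/funext => x; rewrite !enormZ ?ltW //; congr EFin.
  move: (enorm (h x)) (enorm (d1 h x)) (enorm (d2 h x)) => a b e; ring.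
rewrite fint_scale ?exprn_gt0 // sqrtrM ?sqr_ge0 // sqrtr_sqr ger0_norm //.
exact: ltW.
Qed.


Lemma frechet_dir (F : curve R -> R) (G : curve R) dF h :
  is_frechet F G dF -> W22 h -> forall eps : R, 0 < eps -> exists delta : R, 0 < delta /\
  forall t : R, 0 < t -> t < delta ->
    `|F (fun x => G x + t *: h x) - F G - t * dF h| <= eps * t.
Proof.
move=> [_ [hZ [_ hfr]]] hW eps e0.
set N := W22norm h.
have N0 : 0 <= N by exact: W22norm_ge0.
set M := N + 1.
have M0 : 0 < M by rewrite /M; lra.
have [d0 [d00 hd]] := hfr (eps / M) (divr_gt0 e0 M0).
exists (d0 / M); split; first exact: divr_gt0.
move=> t t0 td.
have hW' := W22_scale t h t0 hW.
have tM : t * M < d0 by rewrite -ltr_pdivlMr.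
have hn : W22norm (fun x => t *: h x) < d0.
  rewrite W22norm_scale //; apply: le_lt_trans tM.
  by apply: ler_wpM2l; [exact: ltW| rewrite /M lerDl].
have := hd _ hW' hn; rewrite hZ // W22norm_scale // => /le_trans; apply.
have -> : eps * t = eps / M * (t * M) by field; rewrite /M; lra.
apply: ler_wpM2l; first by apply: divr_ge0; [exact: ltW| exact: ltW].
by apply: ler_wpM2l; [exact: ltW| rewrite /M lerDl].
Qed.

Lemma Len_arc (G : curve R) : arclength G -> Len G = 1.
Proof.
move=> harc; rewrite /Len.
have -> : (fun x => (enorm (d1 G x))%:E) = cst 1%:E by apply/funext => x; rewrite harc.
rewrite integral_cst // mul1e. have := @lebesgue_measure_itv R `[0%R, 1%R]. rewrite /= lte_fin ltr01 => ->. by rewrite oppr0 adde0.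
Qed.

Lemma Len_scale (c : R) (g : curve R) : 0 < c -> Len (fun x => c *: g x) = c * Len g.
Proof.
move=> c0; rewrite /Len d1_scale ?gt_eqF //.
have -> : (fun x => (enorm (c *: d1 g x))%:E) = (fun x => (c * enorm (d1 g x))%:E).
  by apply/funext => x; rewrite enormZ // ltW.
exact: fint_scale.
Qed.

Lemma kappa_scale (c : R) (g : curve R) x : 0 < c ->
  kappa2_ds (fun x => c *: g x) x = c^-1 * kappa2_ds g x.
Proof.
move=> c0; rewrite /kappa2_ds d2_scale ?gt_eqF // d1_scale ?gt_eqF //.
rewrite !enormZ ?ltW // dotZl dotZr.
move: (enorm (d1 g x)) (enorm (d2 g x)) (dot (d1 g x) (d2 g x)) => a b D.
have [->|a0] := eqVneq a 0.
  by rewrite mulr0 !expr0n /= !invr0 !mulr0.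
by field; rewrite a0 gt_eqF.
Qed.

Lemma Bend_scale (c : R) (g : curve R) : 0 < c -> Bend (fun x => c *: g x) = c^-1 * Bend g.
Proof.
move=> c0; rewrite /Bend.
transitivity (fine (\int[mu]_(x in `[0%R, 1%R]) ((c^-1 * kappa2_ds g x)%:E))).
  by congr (fine (integral _ _ _)); apply/funext => x; rewrite kappa_scale.
by apply: fint_scale; rewrite invr_gt0.
Qed.

Lemma inv_rtp_ge0 (g : curve R) s t : 0 <= inv_rtp g s t.
Proof.
rewrite /inv_rtp; case: ifP => _ //.
by apply: divr_ge0; [apply: mulr_ge0 => //; exact: enorm_ge0| apply: exprn_ge0; exact: enorm_ge0].
Qed.

Lemma inv_rtp_scale (c : R) (g : curve R) s t : 0 < c ->
  inv_rtp (fun x => c *: g x) s t = c^-1 * inv_rtp g s t.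
Proof.
move=> c0; have c0' : c != 0 by rewrite gt_eqF.
have tauZ : forall v : vec R, (enorm (c *: v))^-1 *: (c *: v) = (enorm v)^-1 *: v.
  move=> v; rewrite enormZ ?ltW // scalerA; congr (_ *: _).
  move: (enorm v) => e; by rewrite invfM mulrAC mulVf // mul1r.
rewrite /inv_rtp d1_scale // -scalerBr tauZ.
rewrite dotZl -scalerA -scalerBr scaler_eq0 (negbTE c0') /=.
case: ifP => _; first by rewrite mulr0.
rewrite !enormZ ?ltW //.
move: (enorm _) (enorm (g t - g s)) => p e.
rewrite exprMn invfM -!exprVn.
have cd : c * c^-1 = 1 by rewrite mulfV.
move: (c^-1) (e^-1) cd => d E cd.
transitivity (2 * p * E ^+ 2 * d * (c * d)); first by ring.
by rewrite cd mulr1; ring.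
Qed.

Lemma TP_ge0 (q : R) (g : curve R) : 0 <= TP q g.
Proof.
rewrite /TP; apply: fine_ge0; apply: integral_ge0 => s _.
apply: integral_ge0 => t _; rewrite lee_fin.
by apply: mulr_ge0; [apply: mulr_ge0; [exact: powR_ge0| exact: enorm_ge0]| exact: enorm_ge0].
Qed.

Lemma TP_scale (q c : R) (g : curve R) : 0 < c ->
  TP q (fun x => c *: g x) = (c^-1 `^ q * (c * c)) * TP q g.
Proof.
move=> c0; have c0' : c != 0 by rewrite gt_eqF.
have K0 : 0 < c^-1 `^ q * (c * c).
  by apply: mulr_gt0; [apply: powR_gt0; rewrite invr_gt0| exact: mulr_gt0].
rewrite /TP.
transitivity (fine (\int[mu]_(s in `[0%R, 1%R]) ((c^-1 `^ q * (c * c))%:E *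
   \int[mu]_(t in `[0%R, 1%R]) ((inv_rtp g s t `^ q * enorm (d1 g s) * enorm (d1 g t))%:E))%E)).
  congr (fine (integral _ _ _)); apply/funext => s.
  rewrite -integralZ_pos //; congr (integral _ _ _); apply/funext => t.
  have ci0 : 0 <= c^-1 by rewrite invr_ge0 ltW.
  rewrite d1_scale // !enormZ ?ltW // inv_rtp_scale // (powRM q ci0 (inv_rtp_ge0 g s t)).
  rewrite -EFinM; congr EFin.
  move: (c^-1 `^ q) (inv_rtp g s t `^ q) (enorm (d1 g s)) (enorm (d1 g t)) => a b x y.
  ring.
transitivity (fine ((c^-1 `^ q * (c * c))%:E * \int[mu]_(s in `[0%R, 1%R]) \int[mu]_(t in `[0%R, 1%R])
   ((inv_rtp g s t `^ q * enorm (d1 g s) * enorm (d1 g t))%:E))%E).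
  congr fine; exact: integralZ_pos.
exact: fineZ_pos.
Qed.

Lemma Kpow (q c : R) : 2 < q -> 0 < c ->
  (c^-1 `^ q * (c * c)) `^ (1 / (q - 2)) = c^-1.
Proof.
move=> q2 c0.
have ci0 : 0 < c^-1 by rewrite invr_gt0.
have K0 : 0 < c^-1 `^ q * (c * c).
  by apply: mulr_gt0; [apply: powR_gt0| exact: mulr_gt0].
apply: ln_inj; rewrite ?posrE ?powR_gt0 //.
rewrite ln_powR lnM ?posrE ?powR_gt0 ?mulr_gt0 // ln_powR lnM ?posrE // lnV ?posrE //.
have q20 : q - 2 != 0 by rewrite subr_eq0 gt_eqF.
move: (ln c) => l.
by field.
Qed.

Lemma Etheta_scale (th q c : R) (g : curve R) : 2 < q -> 0 < c ->
  Etheta th q (fun x => c *: g x) = c^-1 * Etheta th q g.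
Proof.
move=> q2 c0.
rewrite /Etheta Bend_scale // TP_scale // powRM ?TP_ge0 //; last first.
  by apply: mulr_ge0; [exact: powR_ge0| apply: mulr_ge0; exact: ltW].
rewrite Kpow //.
move: (Bend g) (TP q g `^ (1 / (q - 2))) => a b; ring.
Qed.

Lemma small_zero (x C : R) : 0 <= C -> (forall eps : R, 0 < eps -> eps <= 1 -> `|x| <= eps * C) -> x = 0.
Proof.
move=> C0 H; apply/eqP; apply: contraT => x0.
have nx : 0 < `|x| by rewrite normr_gt0.
set e := Num.min 1 (`|x| / (C + 1)).
have e0 : 0 < e by rewrite lt_min ltr01 divr_gt0 //; lra.
have e1 : e <= 1 by rewrite ge_min lexx.
have e2 : e <= `|x| / (C + 1) by rewrite ge_min lexx orbT.
have := H e e0 e1.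
have : e * (C + 1) <= `|x| by rewrite -ler_pdivlMr //; lra.
nra.
Qed.

Lemma dir_scaleG (F : curve R -> R) (G : curve R) (t : R) :
  F (fun x => G x + t *: G x) = F (fun x => (1 + t) *: G x).
Proof. by congr F; apply/funext => x; rewrite scalerDl scale1r. Qed.

Lemma dL_G (G : curve R) dL : arclength G -> W22 G -> is_frechet (@Len R) G dL -> dL G = 1.
Proof.
move=> harc hW hdL.
suff : dL G - 1 = 0 by move/eqP; rewrite subr_eq0 => /eqP.
apply: (small_zero _ 1 ler01) => eps e0 _.
have [d [d0 hd]] := frechet_dir _ _ _ _ hdL hW eps e0.
have t0 : 0 < d / 2 by rewrite divr_gt0.
have td : d / 2 < d by rewrite ltr_pdivrMr //; lra.
have := hd _ t0 td.
rewrite dir_scaleG Len_scale ?Len_arc //; last by lra.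
move: (d / 2) t0 => t t0.
rewrite (_ : (1 + t) * 1 - 1 - t * dL G = t * - (dL G - 1)); last by ring.
rewrite normrM normrN gtr0_norm // mulr1 [eps * t]mulrC ler_pM2l //.
Qed.

Lemma dE_G (th q : R) (G : curve R) dE : 2 < q -> W22 G ->
  is_frechet (Etheta th q) G dE -> dE G = - Etheta th q G.
Proof.
move=> q2 hW hdE.
suff : dE G + Etheta th q G = 0 by move/eqP; rewrite addr_eq0 => /eqP.
set E0 := Etheta th q G.
apply: (small_zero _ 2) => // eps e0 _.
have [d [d0 hd]] := frechet_dir _ _ _ _ hdE hW eps e0.
set t := Num.min (d / 2) (eps / (`|E0| + 1)).
have nE : 0 <= `|E0| := normr_ge0 _.
have t0 : 0 < t by rewrite lt_min !divr_gt0 //; lra.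
have td : t < d.
  apply: (le_lt_trans (y := d / 2)); first by rewrite ge_min lexx.
  rewrite ltr_pdivrMr //; lra.
have te : t * (`|E0| + 1) <= eps.
  rewrite -ler_pdivlMr; last by lra.
  by rewrite ge_min lexx orbT.
have := hd _ t0 td.
rewrite dir_scaleG Etheta_scale //; last by lra.
rewrite -/E0.
have t1 : 1 + t != 0 by rewrite gt_eqF //; lra.
set u := (1 + t)^-1.
have u0 : 0 < u by rewrite invr_gt0; lra.
have u1 : u <= 1.
  have : u * (1 + t) = 1 by rewrite /u mulVf.
  nra.
set b := dE G.
rewrite (_ : u * E0 - E0 - t * b = - t * ((b + E0) - t * u * E0)); last first.
  by rewrite /u; field.
move=> H; rewrite normrM normrN (gtr0_norm t0) in H.
have H1 : `|b + E0 - t * u * E0| <= eps by nra.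
have H2 : `|b + E0| <= `|(b + E0) - t * u * E0| + `|t * u * E0|.
  by rewrite -[X in `|X| <= _](subrK (t * u * E0)) ler_normD.
rewrite !normrM (gtr0_norm t0) (gtr0_norm u0) in H2.
nra.
Qed.

Lemma final_ineq (t eps a b E0 Lp Ep : R) : 0 < t -> t <= eps -> eps <= 1 ->
  `|Lp - 1 - t * a| <= eps * t -> `|Ep - E0 - t * b| <= eps * t ->
  `|Lp * Ep - 1 * E0 - t * 0| <= eps * t ->
  `|b + E0 * a| <= eps * (2 + `|E0| + (`|a| + 1) * (`|b| + 1)).
Proof.
move=> t0 te e1 HL HE HS.
set A := Lp - 1 - t * a in HL; set B := Ep - E0 - t * b in HE.
set S' := Lp * Ep - 1 * E0 - t * 0 in HS.
have X : t * (b + E0 * a) = S' - B - A * E0 - (t * a + A) * (t * b + B).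
  by rewrite /S' /A /B; ring.
have N1 := ler_normB (S' - B - A * E0) ((t * a + A) * (t * b + B)).
have N2 := ler_normB (S' - B) (A * E0).
have N3 := ler_normB S' B.
have P1 : `|t * a + A| <= t * `|a| + eps * t.
  by apply: (le_trans (ler_normD _ _)); rewrite normrM gtr0_norm // lerD2l.
have P2 : `|t * b + B| <= t * `|b| + eps * t.
  by apply: (le_trans (ler_normD _ _)); rewrite normrM gtr0_norm // lerD2l.
have PQ : `|(t * a + A) * (t * b + B)| <= (t * `|a| + eps * t) * (t * `|b| + eps * t).
  by rewrite normrM; apply: ler_pM.
have AE : `|A * E0| <= eps * t * `|E0|.
  by rewrite normrM; apply: ler_wpM2r.
rewrite -X normrM gtr0_norm // in N1.
have na := normr_ge0 a; have nb' := normr_ge0 b; have nE := normr_ge0 E0.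
have T1 : t * `|b + E0 * a| <= t * (eps * 2 + eps * `|E0| + t * ((`|a| + eps) * (`|b| + eps))).
  have -> : t * (eps * 2 + eps * `|E0| + t * ((`|a| + eps) * (`|b| + eps))) =
    eps * t + eps * t + eps * t * `|E0| + (t * `|a| + eps * t) * (t * `|b| + eps * t) by ring.
  move: N1 N2 N3 PQ AE HS HE.
  move: (`|S' - B - A * E0|) (`|S' - B|) (`|(t * a + A) * (t * b + B)|) (`|A * E0|) (`|S'|) (`|B|).
  move: (eps * t) (eps * t * `|E0|) ((t * `|a| + eps * t) * (t * `|b| + eps * t)) => p1 p2 p3.
  move=> z1 z2 z3 z4 z5 z6; lra.
rewrite ler_pM2l // in T1.
have T3 : t * ((`|a| + eps) * (`|b| + eps)) <= eps * ((`|a| + 1) * (`|b| + 1)).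
  apply: ler_pM => //; first exact: ltW.
  by apply: mulr_ge0; lra.
  by apply: ler_pM; lra.
have -> : eps * (2 + `|E0| + (`|a| + 1) * (`|b| + 1)) = eps * 2 + eps * `|E0| + eps * ((`|a| + 1) * (`|b| + 1)) by ring.
move: T1 T3; move: (`|b + E0 * a|) (t * ((`|a| + eps) * (`|b| + eps))) (eps * ((`|a| + 1) * (`|b| + 1))) => y w1 w2.
move=> T1 T3.
lra.
Qed.

Lemma crit_S (th q : R) (G : curve R) dE dL h : 2 < q -> W22 G -> arclength G ->
  is_frechet (Etheta th q) G dE -> is_frechet (@Len R) G dL ->
  is_frechet (Stheta th q) G (fun _ => 0) -> W22 h -> dE h + Etheta th q G * dL h = 0.
Proof.
move=> q2 hW harc hdE hdL hdS hh.
apply: (small_zero _ (2 + `|Etheta th q G| + (`|dL h| + 1) * (`|dE h| + 1))).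
  have := normr_ge0 (Etheta th q G); have := normr_ge0 (dL h); have := normr_ge0 (dE h).
  nra.
move=> eps e0 e1.
have [dl [dl0 hl]] := frechet_dir _ _ _ _ hdL hh eps e0.
have [de [de0 he]] := frechet_dir _ _ _ _ hdE hh eps e0.
have [ds [ds0 hs]] := frechet_dir _ _ _ _ hdS hh eps e0.
set m := Num.min (Num.min dl de) (Num.min ds eps).
have m0 : 0 < m by rewrite !lt_min dl0 de0 ds0 e0.
have t0 : 0 < m / 2 by rewrite divr_gt0.
have tm : m / 2 < m by rewrite ltr_pdivrMr //; lra.
have mdl : m <= dl by rewrite /m !ge_min lexx ?orbT.
have mde : m <= de by rewrite /m !ge_min lexx ?orbT.
have mds : m <= ds by rewrite /m !ge_min lexx ?orbT.
have mde' : m <= eps by rewrite /m !ge_min lexx ?orbT.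
have HL := hl _ t0 (lt_le_trans tm mdl).
have HE := he _ t0 (lt_le_trans tm mde).
have HS := hs _ t0 (lt_le_trans tm mds).
rewrite /Stheta /= (Len_arc G harc) in HS.
rewrite (Len_arc G harc) in HL.
apply: (final_ineq _ _ _ _ _ _ _ t0 _ e1 HL HE HS).
exact: ltW (lt_le_trans tm mde').
Qed.

End Helpers.

Theorem corollary4p3 (R : realType) (q th : R) (hq : 2 < q <= 4) (hth : 0 < th)
  (G : curve R) (hW : W22 G) (hinj : closed_injective G) (harc : arclength G)
  (dE dL : curve R -> R)
  (hdE : is_frechet (Etheta th q) G dE) (hdL : is_frechet (@Len R) G dL) :
  (is_frechet (Stheta th q) G (fun _ => 0) ->
     forall h, W22 h -> dE h + Etheta th q G * dL h = 0) /\
  (forall K0 : curve R, in_knot_class K0 G ->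
     (exists mu : R, forall h, W22 h -> dE h + mu * dL h = 0) ->
     forall h, W22 h -> dE h + Etheta th q G * dL h = 0).
Proof.
have q2 : 2 < q by case/andP: hq.
split.
  by move=> hdS h hh; apply: crit_S.
move=> K0 _ [m hm] h hh.
have hG := hm G hW.
rewrite (dL_G _ _ _ harc hW hdL) (dE_G _ _ _ _ _ q2 hW hdE) mulr1 in hG.
have -> : Etheta th q G = m by lra.
exact: hm.
Qed.
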